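(* For every hypergraph with loops $G=(V,E,L)$, the convex set $\mathrm{PP}(G)$ is closed.
   Context: A hypergraph with loops is $G=(V,E,L)$: $V$ a finite node set, $E$ a set of subsets of $V$ of cardinality at least two, $L$ a set of loops $\{i,i\}$, $i\in V$, partitioned as $L=L^-\cup L^+$ (minus/plus loops). $\mathrm{PP}(G):=\mathrm{conv}\{z\in\mathbb{R}^{V\cup E\cup L}: z_{ii}\ge z_i^2\ \forall\{i,i\}\in L^+,\ z_{ii}\le z_i^2\ \forall \{i,i\}\in L^-,\ z_e=\prod_{i\in e}z_i\ \forall e\in E,\ z_i\in[0,1]\ \forall i\in V\}$. *)

(* Defs.v *)
From HB Require Import structures.
From mathcomp Require Import all_boot all_order all_algebra.
From mathcomp Require Import all_classical all_reals all_analysis.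
Set Implicit Arguments. Unset Strict Implicit. Unset Printing Implicit Defensive.
Import Order.TTheory GRing.Theory Num.Theory.
Local Open Scope ring_scope.
(* V is a finite type of nodes; E a set of subsets of V of cardinality >= 2;
   a loop {i,i} is identified with its node i, so L^-, L^+ : {set V}. *)
Record hypergraph_loops (V : finType) := HypergraphLoops {
  hedges : {set {set V}};
  lminus : {set V};
  lplus  : {set V};
  hedges_card : forall e, e \in hedges -> (1 < #|e|)%N;
  loops_disjoint : [disjoint lminus & lplus]
}.

Local Open Scope classical_set_scope.

Definition hidx (V : finType) (G : hypergraph_loops V) : Type :=
  (V + ({e : {set V} | e \in hedges G} + {i : V | i \in lminus G :|: lplus G}))%type.

Definition PPset (R : realType) (V : finType) (G : hypergraph_loops V)
  : set (hidx G -> R) :=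
  [set z |
     (forall l : {i : V | i \in lminus G :|: lplus G},
        sval l \in lplus G -> z (inr (inr l)) >= (z (inl (sval l))) ^+ 2)
  /\ (forall l : {i : V | i \in lminus G :|: lplus G},
        sval l \in lminus G -> z (inr (inr l)) <= (z (inl (sval l))) ^+ 2)
  /\ (forall e : {e : {set V} | e \in hedges G},
        z (inr (inl e)) = \prod_(i in sval e) z (inl i))
  /\ (forall i : V, 0 <= z (inl i) <= 1)].

Arguments PPset R {V} G.

Definition conv_hull (R : realType) (I : Type) (S : set (I -> R)) : set (I -> R) :=
  [set z | exists (n : nat) (w : 'I_n -> R) (p : 'I_n -> (I -> R)),
     (forall k, 0 <= w k) /\ \sum_(k < n) w k = 1 /\ (forall k, S (p k)) /\
     z = (fun x => \sum_(k < n) w k * p k x)].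

Definition PP (R : realType) (V : finType) (G : hypergraph_loops V)
  : set (hidx G -> R) := conv_hull (PPset R G).
Arguments PP R {V} G.

(* Main.v *)
Require Import Defs.
From HB Require Import structures.
From mathcomp Require Import all_boot all_order all_algebra.
From mathcomp Require Import all_classical all_reals all_analysis.
From mathcomp Require Import lra.
Import numFieldTopology.Exports.
Import Order.TTheory GRing.Theory Num.Theory.
Local Open Scope ring_scope.
Local Open Scope classical_set_scope.

Section Cara.
Variables (R : realType) (I : finType) (S : set (I -> R)).

Definition rep (z : I -> R) n := exists (w : 'I_n -> R) (p : 'I_n -> (I -> R)),
     (forall k, 0 <= w k) /\ \sum_(k < n) w k = 1 /\ (forall k, S (p k)) /\
     z = (fun x => \sum_(k < n) w k * p k x).

Lemma rep_reduce z m : rep z m.+1 -> (#|I|.+1 < m.+1)%N -> rep z m.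
Proof.
move=> [w [p [w0 [w1 [Sp ->]]]]] hn.
pose A : 'M[R]_(m.+1, #|I|.+1) := \matrix_(k, j)
  (if unlift ord_max j is Some j' then p k (enum_val j') else 1).
have [mur [mu0 muA]] : exists mu : 'rV[R]_(m.+1), mu != 0 /\ mu *m A = 0.
  have : kermx A != 0.
    rewrite -mxrank_eq0 mxrank_ker subn_eq0 -ltnNge.
    exact: leq_ltn_trans (rank_leq_col A) hn.
  move=> /eqP nz.
  case: (pickP (fun i => row i (kermx A) != 0)) => [i hi | h].
    by exists (row i (kermx A)); split => //; rewrite -row_mul mulmx_ker row0.
  exfalso; apply: nz; apply/matrixP => i j.
  have /negbFE/eqP/matrixP/(_ 0 j) := h i.
  by rewrite !mxE.
pose mu k := mur 0 k.
have hsum0 : \sum_k mu k = 0.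
  have /matrixP/(_ 0 ord_max) := muA; rewrite !mxE => h; rewrite -[RHS]h.
  by apply: eq_bigr => k _; rewrite mxE unlift_none mulr1.
have hcomb : forall x, \sum_k mu k * p k x = 0.
  move=> x; have /matrixP/(_ 0 (lift ord_max (enum_rank x))) := muA.
  rewrite !mxE => h; rewrite -[RHS]h; apply: eq_bigr => k _.
  by rewrite mxE liftK enum_rankK.
have [k1 hk1] : exists k, 0 < mu k.
  case: (boolP [exists k, 0 < mu k]) => [/existsP // | /existsPn hneg].
  exfalso; move/negP: mu0; apply; apply/eqP/rowP => k.
  have h0 : forall k, true -> 0 <= - mu k.
    by move=> k' _; rewrite oppr_ge0 leNgt; exact: hneg.
  have := psumr_eq0P h0; rewrite sumrN hsum0 oppr0 => /(_ erefl k erefl).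
  by rewrite !mxE => /eqP; rewrite oppr_eq0 => /eqP.
case: (@arg_minP _ _ _ k1 (fun k => 0 < mu k) (fun k => w k / mu k) hk1) => k0 hk0 hmin.
set t := w k0 / mu k0.
have t0 : 0 <= t by rewrite divr_ge0 // ltW.
pose w' k := w k - t * mu k.
have w'0 : forall k, 0 <= w' k.
  move=> k; rewrite /w' subr_ge0; case: (ltP 0 (mu k)) => h.
    by rewrite -ler_pdivlMr //; exact: hmin.
  by apply: le_trans (w0 k); exact: mulr_ge0_le0.
have w'k0 : w' k0 = 0.
  by rewrite /w' /t divfK ?subrr // gt_eqF.
have w'1 : \sum_k w' k = 1.
  by rewrite /w' sumrB -mulr_sumr hsum0 mulr0 subr0.
have w'c : forall x, \sum_k w k * p k x = \sum_k w' k * p k x.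
  move=> x; rewrite /w'; under [RHS]eq_bigr do rewrite mulrBl -mulrA.
  by rewrite sumrB -mulr_sumr hcomb mulr0 subr0.
exists (fun k => w' (lift k0 k)), (fun k => p (lift k0 k)).
split => //; split.
  by rewrite -w'1 (bigD1_ord k0) //= w'k0 add0r.
split => //.
apply: funext => x; rewrite w'c (bigD1_ord k0) //= w'k0 mul0r add0r //.
Qed.


Lemma rep_pad z n M : rep z n -> (n <= M)%N -> rep z M.
Proof.
case: n => [|n] [w [p [w0 [w1 [Sp ->]]]]] hnM.
  by move: w1; rewrite big_ord0 => /eqP; rewrite eq_sym oner_eq0.
have key : forall F : nat -> R, (forall k, (n.+1 <= k)%N -> F k = 0) ->
    \sum_(k < M) F k = \sum_(k < n.+1) F k.
  move=> F hF; rewrite (big_ord_widen _ F hnM) [RHS]big_mkcond.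
  apply: eq_bigr => k _; case: ifP => // /negbT; rewrite -leqNgt => /hF ->.
  by [].
pose W k := if (k < n.+1)%N then w (inord k) else 0.
exists (fun k : 'I_M => W k), (fun k : 'I_M => p (inord k)).
split.
  by move=> k; rewrite /W; case: ifP => // _; exact: w0.
split.
  rewrite (key W); last by move=> k hk; rewrite /W ltnNge hk.
  by rewrite -w1; apply: eq_bigr => k _; rewrite /W ltn_ord inord_val.
split => //.
apply: funext => x.
rewrite (key (fun k => W k * p (inord k) x)); last by move=> k hk; rewrite /W ltnNge hk mul0r.
by apply: eq_bigr => k _; rewrite /W ltn_ord inord_val.
Qed.

Lemma rep_cara z n : rep z n -> rep z #|I|.+1.
Proof.
elim: n => [|n IH] h; first exact: rep_pad h _.
case: (leqP n.+1 #|I|.+1) => hn; first exact: rep_pad h hn.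
exact/IH/rep_reduce.
Qed.

End Cara.

Section Topo.
Context {R : realType} {P : eqType}.
Local Notation Th := {ptws P -> R}.

Lemma cont_big_sum (T : Type) (s : seq T) (Q : pred T) (F : T -> Th -> R) th :
  (forall k, {for th, continuous (F k)}) ->
  {for th, continuous (fun t => \sum_(k <- s | Q k) F k t)}.
Proof.
move=> hF; elim: s => [|a s IH].
  have -> : (fun t => \sum_(k <- [::] | Q k) F k t) = fun _ => 0.
    by apply: funext => t; rewrite big_nil.
  Timeout 10 exact: (@cst_continuous Th R 0 th).
have -> : (fun t => \sum_(k <- a :: s | Q k) F k t) =
   (fun t => (if Q a then F a t else 0) + \sum_(k <- s | Q k) F k t).
  by apply: funext => t; rewrite big_cons; case: (Q a); rewrite ?add0r.
have ha : {for th, continuous (fun t => if Q a then F a t else 0)}.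
  case: (Q a); [exact: hF | exact: (@cst_continuous Th R 0 th)].
Timeout 20 exact: (@continuousD R R^o Th _ _ th ha IH).
Qed.

Lemma cont_big_prod (T : Type) (s : seq T) (Q : pred T) (F : T -> Th -> R) th :
  (forall k, {for th, continuous (F k)}) ->
  {for th, continuous (fun t => \prod_(k <- s | Q k) F k t)}.
Proof.
move=> hF; elim: s => [|a s IH].
  have -> : (fun t => \prod_(k <- [::] | Q k) F k t) = fun _ => 1.
    by apply: funext => t; rewrite big_nil.
  exact: (@cst_continuous Th R 1 th).
have -> : (fun t => \prod_(k <- a :: s | Q k) F k t) =
   (fun t => (if Q a then F a t else 1) * \prod_(k <- s | Q k) F k t).
  by apply: funext => t; rewrite big_cons; case: (Q a); rewrite ?mul1r.
have ha : {for th, continuous (fun t => if Q a then F a t else 1)}.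
  case: (Q a); [exact: hF | exact: (@cst_continuous Th R 1 th)].
exact: (@continuousM R Th _ _ th ha IH).
Qed.

Lemma cont_proj (th : Th) a : {for th, continuous (fun t : Th => t a)}.
Proof. exact: (@proj_continuous P (fun _ => R) a th). Qed.

Lemma cluster_le (F : set_system Th) (f : Th -> R) th c :
  {for th, continuous f} -> cluster F th ->
  (forall e, 0 < e -> F [set t | f t < c + e]) -> f th <= c.
Proof.
move=> fc cl hF; rewrite leNgt; apply/negP => hlt.
set e := (f th - c) / 2.
have e0 : 0 < e by rewrite /e divr_gt0 // subr_gt0.
have nb : nbhs th (f @^-1` [set r | c + e < r]).
  apply: fc; apply: open_nbhs_nbhs; split; first exact: open_gt.
  rewrite /= /e. Timeout 10 lra.
have [t [/= h1 h2]] := cl _ _ (hF e e0) nb.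
Timeout 10 lra.
Qed.

Lemma nbhs_coord (I : finType) (z : {ptws I -> R}) e : 0 < e ->
  nbhs z [set z' | forall j, `|z' j - z j| < e].
Proof.
move=> e0.
have H : forall j, nbhs z [set z' : {ptws I -> R} | `|z' j - z j| < e].
  move=> j.
  Timeout 10 have h1 := @proj_continuous I (fun _ => R) j z.
  Timeout 10 have h2 := nbhsx_ballx (z j) e e0.
  Timeout 10 have h3 := h1 _ h2.
  have h4 : (proj j : {ptws I -> R} -> R) @^-1` ball (z j) e `<=` [set z' : {ptws I -> R} | `|z' j - z j| < e].
    by move=> y; rewrite /= /ball /= distrC.
  Timeout 20 exact: (@filterS _ (nbhs z) _ _ _ h4 h3).
Timeout 30 exact: (@filter_forall _ I (fun j => [set z' : {ptws I -> R} | `|z' j - z j| < e]) (nbhs z) (@nbhs_filter _ z) H).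
Qed.

Lemma cluster_ge (F : set_system Th) (f : Th -> R) th c :
  {for th, continuous f} -> cluster F th ->
  (forall e, 0 < e -> F [set t | c - e < f t]) -> c <= f th.
Proof.
move=> fc cl hF.
have fc' : {for th, continuous (fun t => - f t)} by exact: (@continuousN R R^o Th f th fc).
have := @cluster_le F (fun t => - f t) th (- c) fc' cl.
rewrite lerN2; apply => e e0; have := hF e e0; congr F.
by apply: funext => t /=; apply: propext; rewrite -ltrN2 opprD opprK addrC.
Qed.

Lemma cluster_eq (F : set_system Th) (f : Th -> R) th c : Filter F ->
  {for th, continuous f} -> cluster F th ->
  (forall e, 0 < e -> F [set t | `|f t - c| < e]) -> f th = c.
Proof.
move=> FF fc cl hF; apply/eqP; rewrite eq_le; apply/andP; split.
  apply: cluster_le fc cl _ => e e0; apply: filterS (hF e e0) => t /=.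
  by rewrite ltr_distl => /andP[].
apply: cluster_ge fc cl _ => e e0; apply: filterS (hF e e0) => t /=.
by rewrite ltr_distl => /andP[].
Qed.
End Topo.

Section Main.
Variables (R : realType) (V : finType) (G : hypergraph_loops V).
Local Notation I := (hidx G).
Local Notation NN := (#|{: hidx G}|.+1).
Local Notation Pt := ('I_NN * option V)%type.
Local Notation Th := {ptws Pt -> R}.

Definition qv (th : Pt -> R) (k : 'I_NN) (j : I) : R :=
  match j with
  | inl i => th (k, Some i)
  | inr (inl e) => \prod_(i in sval e) th (k, Some i)
  | inr (inr l) => th (k, Some (sval l)) ^+ 2
  end.
Definition psi (th : Pt -> R) (j : I) := \sum_(k < NN) th (k, None) * qv th k j.

Lemma cont_mul (f g : Th -> R) th : {for th, continuous f} -> {for th, continuous g} ->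
  {for th, continuous (fun t => f t * g t)}.
Proof. exact: (@continuousM R Th f g th). Qed.

Lemma cont_psi (th : Th) j : {for th, continuous (fun t : Th => psi t j)}.
Proof.
apply: cont_big_sum => k.
apply: cont_mul; first exact: cont_proj.
case: j => [i|[e|l]].
- exact: cont_proj.
- by apply: cont_big_prod => i; exact: cont_proj.
- have -> : (fun t : Th => qv t k (inr (inr l))) =
     (fun t => t (k, Some (sval l)) * t (k, Some (sval l))).
    by apply: funext => t; rewrite /= expr2.
  by apply: cont_mul; exact: cont_proj.
Qed.

Definition Cz (z' : I -> R) (th : Pt -> R) :=
  (forall i, z' (inl i) = psi th (inl i)) /\
  (forall e, z' (inr (inl e)) = psi th (inr (inl e))) /\
  (forall l : {i : V | i \in lminus G :|: lplus G}, sval l \in lplus G ->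
     psi th (inr (inr l)) <= z' (inr (inr l))) /\
  (forall l : {i : V | i \in lminus G :|: lplus G}, sval l \in lminus G ->
     z' (inr (inr l)) <= psi th (inr (inr l))).

Definition Theta : set Th := [set f | forall a, `[(0:R), 1] (f a)].

Definition Sset (z : I -> R) (e : R) : set Th :=
  [set th | Theta th /\ \sum_(k < NN) th (k, None) = 1 /\
     exists z' : I -> R, (forall j, `|z' j - z j| < e) /\ Cz z' th].

Lemma Theta_compact : compact Theta.
Proof. exact: (@tychonoff Pt (fun _ => R) (fun _ => `[(0:R), 1]) (fun _ => @segment_compact R 0 1)). Qed.


Lemma main_closed : closed (PP R G : set {ptws hidx G -> R}).
Proof.
move=> z zcl.
pose F := filter_from [set e : R | 0 < e] (Sset z).
have FF : Filter F.
  apply: filter_from_filter.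
    by exists 1; rewrite /= ltr01.
  move=> i j i0 j0; exists (Num.min i j); first by rewrite /= lt_min i0 j0.
  move=> th [Tth [s1 [z' [hz' hc]]]]; split; (split; first by []); (split; first by []); exists z'; split => // k.
    by apply: lt_le_trans (hz' k) _; rewrite ge_min lexx.
  by apply: lt_le_trans (hz' k) _; rewrite ge_min lexx orbT.
have FP : ProperFilter F.
  apply: filter_from_proper => // e e0.
  have [z' [PPz' Uz']] := zcl _ (@nbhs_coord R _ z e e0).
  case: PPz' => n hrep.
  have [w [p [w0 [w1 [Sp zdef]]]]] := @rep_cara R _ (PPset R G) z' n hrep.
  exists (fun a : Pt => match a with (k, None) => w k | (k, Some i) => p k (inl i) end).
  split.
    case=> k [i|] /=; rewrite in_itv /=.
      by have [_ [_ [_ h]]] := Sp k; exact: h.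
    rewrite w0 /= -w1 (bigD1 k) //= lerDl sumr_ge0 //.
  split; first by [].
  exists z'; split; first exact: Uz'.
  rewrite zdef; split; [|split; [|split]].
  - by move=> i; rewrite /psi; apply: eq_bigr.
  - move=> e'; rewrite /psi; apply: eq_bigr => k _ /=.
    by have [_ [_ [h _]]] := Sp k; rewrite h.
  - move=> l hl; rewrite /psi; apply: ler_sum => k _ /=.
    apply: ler_wpM2l; first exact: w0.
    by have [h _] := Sp k; exact: h.
  - move=> l hl; rewrite /psi; apply: ler_sum => k _ /=.
    apply: ler_wpM2l; first exact: w0.
    by have [_ [h _]] := Sp k; exact: h.
have FTh : F Theta by exists 1 => //= th [].
have [ths [Thths clths]] := Theta_compact F FP FTh.
have hsum : \sum_(k < NN) ths (k, None) = 1.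
  apply: (@cluster_eq _ _ F (fun t : Th => \sum_(k < NN) t (k, None)) ths 1 FF _ clths).
    by apply: cont_big_sum => k; exact: cont_proj.
  move=> e e0; exists e => // th [_ [s1 _]] /=.
  by rewrite s1 subrr normr0.
have hV : forall i, psi ths (inl i) = z (inl i).
  move=> i; apply: (@cluster_eq _ _ F (fun t : Th => psi t (inl i)) ths _ FF (cont_psi _ _) clths).
  move=> e e0; exists e => // th [_ [_ [z' [hz' [h _]]]]] /=.
  by rewrite -h; exact: hz'.
have hE : forall e, psi ths (inr (inl e)) = z (inr (inl e)).
  move=> e'; apply: (@cluster_eq _ _ F (fun t : Th => psi t (inr (inl e'))) ths _ FF (cont_psi _ _) clths).
  move=> e e0; exists e => // th [_ [_ [z' [hz' [_ [h _]]]]]] /=.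
  by rewrite -h; exact: hz'.
have hP : forall l : {i : V | i \in lminus G :|: lplus G}, sval l \in lplus G ->
    psi ths (inr (inr l)) <= z (inr (inr l)).
  move=> l hl; apply: (@cluster_le _ _ F (fun t : Th => psi t (inr (inr l))) ths _ (cont_psi _ _) clths).
  move=> e e0; exists e => // th [_ [_ [z' [hz' [_ [_ [h _]]]]]]] /=.
  have := hz' (inr (inr l)); rewrite ltr_distl => /andP[_ h2].
  exact: le_lt_trans (h l hl) h2.
have hM : forall l : {i : V | i \in lminus G :|: lplus G}, sval l \in lminus G ->
    z (inr (inr l)) <= psi ths (inr (inr l)).
  move=> l hl; apply: (@cluster_ge _ _ F (fun t : Th => psi t (inr (inr l))) ths _ (cont_psi _ _) clths).
  move=> e e0; exists e => // th [_ [_ [z' [hz' [_ [_ [_ h]]]]]]] /=.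
  have := hz' (inr (inr l)); rewrite ltr_distl => /andP[h2 _].
  exact: lt_le_trans h2 (h l hl).
have box : forall a, 0 <= ths a <= 1.
  by move=> a; have := Thths a; rewrite /= in_itv.
exists NN, (fun k => ths (k, None)), (fun k j => qv ths k j + (z j - psi ths j)).
split; first by move=> k; have /andP[] := box (k, None).
split; first exact: hsum.
split.
  move=> k; split; [|split; [|split]].
  - move=> l hl /=; rewrite hV subrr addr0 lerDl subr_ge0; exact: hP.
  - move=> l hl /=; rewrite hV subrr addr0 gerDl subr_le0; exact: hM.
  - move=> e /=; rewrite hE subrr addr0; apply: eq_bigr => i _.
    by rewrite hV subrr addr0.
  - by move=> i /=; rewrite hV subrr addr0; exact: box.
apply: funext => j.
under eq_bigr do rewrite mulrDr.
rewrite big_split /= -mulr_suml hsum mul1r.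
rewrite -/(psi ths j).
by rewrite addrC subrK.
Qed.

End Main.


(* R^{V ∪ E ∪ L} carries the product (= Euclidean) topology. *)
Theorem lemma1 (R : realType) (V : finType) (G : hypergraph_loops V) :
  closed (PP R G : set {ptws hidx G -> R}).
Proof. exact: main_closed. Qed.
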